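(* For every $n\in\mathbb N$ and every choice of digits $c_j\in\{0,\dots,m_j\}$, $j=1,\dots,n$, the increment of $F$ on the cylinder $\Delta^{-\tilde Q}_{c_1c_2\dots c_n}$ equals $$\mu_F\big(\Delta^{-\tilde Q}_{c_1c_2\dots c_n}\big)=\prod_{j=1}^{n}\tilde p_{c_j,j}.$$
   Context: Let $(m_n)_{n\ge1}$ be finite nonnegative integers and $\tilde Q=\|q_{i,n}\|$ ($i\in\{0,\dots,m_n\}$) with $q_{i,n}>0$, $\sum_{i}q_{i,n}=1$ for all $n$, and $\prod_n q_{i_n,n}=0$ for every digit sequence $(i_n)$. Put $a_{0,n}=0$, $a_{i,n}=\sum_{l<i}q_{l,n}$; $\Delta^{\tilde Q}_{j_1j_2\dots}=a_{j_1,1}+\sum_{n\ge2}a_{j_n,n}\prod_{l<n}q_{j_l,l}$. For odd $n$: $\tilde q_{i,n}=q_{i,n}$; for even $n$: $\tilde q_{i,n}=q_{m_n-i,n}$. The nega-$\tilde Q$-representation $x=\Delta^{-\tilde Q}_{i_1i_2\dots}$ means $x=\Delta^{\tilde Q}_{i_1[m_2-i_2]i_3[m_4-i_4]\dots}$; every $x\in[0,1]$ has one. The cylinder $\Delta^{-\tilde Q}_{c_1\dots c_n}$ is the set of $x\in[0,1]$ having a nega-$\tilde Q$-representation whose first $n$ digits are $c_1,\dots,c_n$; it is the segment with endpoints $A=\Delta^{-\tilde Q}_{c_1\dots c_nm_{n+1}0m_{n+3}0m_{n+5}\dots}$ and $B=\Delta^{-\tilde Q}_{c_1\dots c_n0m_{n+2}0m_{n+4}\dots}$,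 where $A$ is the left and $B$ the right endpoint if $n$ is odd, and vice versa if $n$ is even. The increment $\mu_F$ of $F$ on the cylinder is $F(\text{right endpoint})-F(\text{left endpoint})$. Let $P=\|p_{i,n}\|$ have the same shape with $p_{i,n}\in(-1,1)$, $\sum_ip_{i,n}=1$, $\prod_n|p_{i_n,n}|=0$ for every digit sequence, $0<\sum_{i<c}p_{i,n}<1$ for $c\in\{1,\dots,m_n\}$. Put $\beta_{0,n}=0$, $\beta_{c,n}=\sum_{i<c}p_{i,n}$; for odd $n$: $\tilde p_{i,n}=p_{i,n}$, $\tilde\beta_{i,n}=\beta_{i,n}$; for even $n$: $\tilde p_{i,n}=p_{m_n-i,n}$, $\tilde\beta_{i,n}=\beta_{m_n-i,n}$. $F(x)=\beta_{i_1,1}+\sum_{k\ge2}\tilde\beta_{i_k,k}\prod_{j<k}\tilde p_{i_j,j}$ for $x=\Delta^{-\tilde Q}_{i_1i_2\dots}$ (independent of the choice of representation). *)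

(* Defs.v *)
From Stdlib Require Import Reals Lra Lia Arith.
From Coquelicot Require Import Coquelicot.
Open Scope R_scope.

(* Conventions: positions are indexed from 1 as in the paper (index 0 of
   every sequence is unused).  Matrices are  q : nat -> nat -> R  with
   q i n = q_{i,n}. *)

Fixpoint psum (g : nat -> R) (c : nat) : R :=
  match c with
  | O => 0
  | S c' => psum g c' + g c'
  end.

Fixpoint pprod (f : nat -> R) (N : nat) : R :=
  match N with
  | O => 1
  | S N' => pprod f N' * f (S N')
  end.

Definition admissible (m : nat -> nat) (i : nat -> nat) : Prop :=
  forall n, (1 <= n)%nat -> (i n <= m n)%nat.

Definition Qmatrix (m : nat -> nat) (q : nat -> nat -> R) : Prop :=
  (forall n i, (1 <= n)%nat -> (i <= m n)%nat -> 0 < q i n) /\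
  (forall n, (1 <= n)%nat -> psum (fun i => q i n) (S (m n)) = 1) /\
  (forall i : nat -> nat, admissible m i ->
      is_lim_seq (fun N => pprod (fun n => q (i n) n) N) 0).

Definition Pmatrix (m : nat -> nat) (p : nat -> nat -> R) : Prop :=
  (forall n i, (1 <= n)%nat -> (i <= m n)%nat -> -1 < p i n < 1) /\
  (forall n, (1 <= n)%nat -> psum (fun i => p i n) (S (m n)) = 1) /\
  (forall i : nat -> nat, admissible m i ->
      is_lim_seq (fun N => pprod (fun n => Rabs (p (i n) n)) N) 0) /\
  (forall n c, (1 <= n)%nat -> (1 <= c)%nat -> (c <= m n)%nat ->
      0 < psum (fun i => p i n) c < 1).

Definition acoef (q : nat -> nat -> R) (i n : nat) : R := psum (fun l => q l n) i.

Definition DeltaQ (q : nat -> nat -> R) (j : nat -> nat) : R :=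
  Series (fun k => match k with
                   | O => 0
                   | S k' => acoef q (j k) k * pprod (fun l => q (j l) l) k'
                   end).

Definition negadig (m : nat -> nat) (i : nat -> nat) (k : nat) : nat :=
  if Nat.odd k then i k else (m k - i k)%nat.

(* Delta^{-Q~}_{i1 i2 ...} = Delta^{Q~}_{i1 [m2-i2] i3 [m4-i4] ...} *)
Definition DeltaNQ (m : nat -> nat) (q : nat -> nat -> R) (i : nat -> nat) : R :=
  DeltaQ q (negadig m i).

Definition beta (p : nat -> nat -> R) (c n : nat) : R := psum (fun i => p i n) c.

Definition ptilde (m : nat -> nat) (p : nat -> nat -> R) (i n : nat) : R :=
  if Nat.odd n then p i n else p (m n - i)%nat n.

Definition btilde (m : nat -> nat) (p : nat -> nat -> R) (i n : nat) : R :=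
  if Nat.odd n then beta p i n else beta p (m n - i)%nat n.

(* F(x) for x = Delta^{-Q~}_{i1 i2 ...}, computed from the representation
   (i_k):  beta_{i1,1} + sum_{k>=2} btilde_{ik,k} prod_{j<k} ptilde_{ij,j}.
   (btilde_{i,1} = beta_{i,1} since 1 is odd.) *)
Definition Frep (m : nat -> nat) (p : nat -> nat -> R) (i : nat -> nat) : R :=
  Series (fun k => match k with
                   | O => 0
                   | S k' => btilde m p (i k) k * pprod (fun l => ptilde m p (i l) l) k'
                   end).

(* Endpoint representations of the cylinder Delta^{-Q~}_{c1...cn}:
   A = c1..cn m_{n+1} 0 m_{n+3} 0 ...,  B = c1..cn 0 m_{n+2} 0 m_{n+4} ... *)
Definition endA (m : nat -> nat) (n : nat) (c : nat -> nat) (k : nat) : nat :=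
  if (k <=? n)%nat then c k else if Nat.odd (k - n) then m k else 0%nat.

Definition endB (m : nat -> nat) (n : nat) (c : nat -> nat) (k : nat) : nat :=
  if (k <=? n)%nat then c k else if Nat.odd (k - n) then 0%nat else m k.

Definition rightEnd m n c := if Nat.odd n then endB m n c else endA m n c.
Definition leftEnd  m n c := if Nat.odd n then endA m n c else endB m n c.

Definition muF (m : nat -> nat) (p : nat -> nat -> R) (n : nat) (c : nat -> nat) : R :=
  Frep m p (rightEnd m n c) - Frep m p (leftEnd m n c).

(* Main.v *)
Require Import Defs.
From Stdlib Require Import Reals Lra Lia Arith.
From Coquelicot Require Import Coquelicot.
Open Scope R_scope.

Definition eff (m : nat -> nat) (i : nat -> nat) (k : nat) : nat :=
  if Nat.odd k then i k else (m k - i k)%nat.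

Lemma ptilde_eff m p i k : ptilde m p (i k) k = p (eff m i k) k.
Proof. unfold ptilde, eff; destruct (Nat.odd k); reflexivity. Qed.

Lemma btilde_eff m p i k : btilde m p (i k) k = beta p (eff m i k) k.
Proof. unfold btilde, eff; destruct (Nat.odd k); reflexivity. Qed.

Lemma eff_right m n c k : (n < k)%nat -> eff m (rightEnd m n c) k = m k.
Proof.
  intro H. unfold eff, rightEnd, endA, endB.
  assert (E : (k <=? n)%nat = false) by (apply Nat.leb_gt; lia).
  assert (Hs := Nat.odd_sub k n ltac:(lia)).
  destruct (Nat.odd n) eqn:On; cbv beta; rewrite E, Hs; destruct (Nat.odd k); simpl; lia.
Qed.

Lemma eff_left m n c k : (n < k)%nat -> eff m (leftEnd m n c) k = 0%nat.
Proof.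
  intro H. unfold eff, leftEnd, endA, endB.
  assert (E : (k <=? n)%nat = false) by (apply Nat.leb_gt; lia).
  assert (Hs := Nat.odd_sub k n ltac:(lia)).
  destruct (Nat.odd n) eqn:On; cbv beta; rewrite E, Hs; destruct (Nat.odd k); simpl; lia.
Qed.

Lemma right_le m n c k : (1 <= k)%nat ->
  (forall j, (1 <= j)%nat -> (j <= n)%nat -> (c j <= m j)%nat) ->
  (eff m (rightEnd m n c) k <= m k)%nat.
Proof.
  intros Hk Hc. destruct (le_lt_dec k n) as [Hl|Hl].
  - unfold eff, rightEnd, endA, endB.
    assert (E : (k <=? n)%nat = true) by (apply Nat.leb_le; lia).
    destruct (Nat.odd n); cbv beta; rewrite E; destruct (Nat.odd k); try lia; apply Hc; lia.
  - rewrite eff_right by lia. lia.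
Qed.

Lemma end_agree m n c k : (k <= n)%nat -> rightEnd m n c k = leftEnd m n c k.
Proof.
  intro H. unfold rightEnd, leftEnd, endA, endB.
  assert (E : (k <=? n)%nat = true) by (apply Nat.leb_le; lia).
  destruct (Nat.odd n); cbv beta; rewrite E; reflexivity.
Qed.

Definition term m p (i : nat -> nat) (k : nat) : R :=
  match k with
  | O => 0
  | S k' => btilde m p (i k) k * pprod (fun l => ptilde m p (i l) l) k'
  end.

Lemma pprod_ext f g N : (forall l, (1 <= l <= N)%nat -> f l = g l) -> pprod f N = pprod g N.
Proof.
  induction N; intro H; simpl; auto.
  rewrite IHN by (intros; apply H; lia). rewrite H by lia. reflexivity.
Qed.

Lemma pprod_abs f N : Rabs (pprod f N) = pprod (fun l => Rabs (f l)) N.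
Proof. induction N; simpl. apply Rabs_R1. rewrite Rabs_mult, IHN. reflexivity. Qed.

Lemma sum_agree m p n c N : (N <= n)%nat ->
  sum_n (term m p (rightEnd m n c)) N = sum_n (term m p (leftEnd m n c)) N.
Proof.
  induction N; intro H.
  - rewrite !sum_O. reflexivity.
  - rewrite !sum_Sn, IHN by lia. f_equal. simpl.
    rewrite (end_agree m n c (S N)) by lia. f_equal.
    apply pprod_ext. intros. rewrite end_agree by lia. reflexivity.
Qed.

Lemma sum_left m p n c N : (n <= N)%nat ->
  sum_n (term m p (leftEnd m n c)) N = sum_n (term m p (leftEnd m n c)) n.
Proof.
  induction N; intro H.
  - assert (n = 0%nat) by lia. subst. reflexivity.
  - destruct (Nat.eq_dec n (S N)) as [->|Hne]. reflexivity.
    rewrite sum_Sn, IHN by lia.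
    assert (T0 : term m p (leftEnd m n c) (S N) = 0).
    { simpl. rewrite btilde_eff, eff_left by lia. unfold beta; simpl. ring. }
    rewrite T0. apply Rplus_0_r.
Qed.

Lemma sum_right m p n c N (HP : Pmatrix m p) : (n <= N)%nat ->
  @eq R (sum_n (term m p (rightEnd m n c)) N) (sum_n (term m p (rightEnd m n c)) n
   + pprod (fun l => ptilde m p (rightEnd m n c l) l) n
   - pprod (fun l => ptilde m p (rightEnd m n c l) l) N).
Proof.
  induction N; intro H.
  - assert (n = 0%nat) by lia. subst. generalize (sum_n (term m p (rightEnd m 0 c)) 0). intro x. change R in x. ring.
  - destruct (Nat.eq_dec n (S N)) as [->|Hne].
    { generalize (sum_n (term m p (rightEnd m (S N) c)) (S N)). intro x. change R in x. ring. }
    rewrite sum_Sn, IHN by lia. generalize (sum_n (term m p (rightEnd m n c)) n). intro x. simpl. rewrite btilde_eff, ptilde_eff, eff_right by lia.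
    destruct HP as [_ [H2 _]]. specialize (H2 (S N) ltac:(lia)). simpl in H2.
    unfold beta. change plus with Rplus.
    replace (psum (fun i : nat => p i (S N)) (m (S N))) with (1 - p (m (S N)) (S N)) by lra.
    ring.
Qed.

Theorem mainTheorem4 (m : nat -> nat) (q p : nat -> nat -> R)
  (HQ : Qmatrix m q) (HP : Pmatrix m p)
  (n : nat) (c : nat -> nat) (Hn : (1 <= n)%nat)
  (Hc : forall j, (1 <= j)%nat -> (j <= n)%nat -> (c j <= m j)%nat) :
  muF m p n c = pprod (fun j => ptilde m p (c j) j) n.
Proof.
  set (S0 := sum_n (term m p (leftEnd m n c)) n).
  set (E := fun l => ptilde m p (rightEnd m n c l) l).
  assert (HE : is_lim_seq (pprod E) 0).
  { apply is_lim_seq_abs_0.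
    apply is_lim_seq_ext with (u := fun N => pprod (fun l => Rabs (p (eff m (rightEnd m n c) l) l)) N).
    { intro N. rewrite pprod_abs. apply pprod_ext. intros l _. unfold E. rewrite ptilde_eff. reflexivity. }
    destruct HP as [_ [_ [H3 _]]]. apply H3. intros l Hl. apply right_le; auto. }
  assert (HR : is_series (term m p (rightEnd m n c)) (S0 + pprod E n - 0)).
  { unfold is_series.
    change (is_lim_seq (sum_n (term m p (rightEnd m n c))) (S0 + pprod E n - 0)).
    apply is_lim_seq_ext_loc with (u := fun N => S0 + pprod E n - pprod E N).
    { exists n. intros N HN. rewrite sum_right by auto. unfold S0.
      rewrite sum_agree by lia. reflexivity. }
    apply is_lim_seq_minus'. apply is_lim_seq_const. exact HE. }
  assert (HL : is_series (term m p (leftEnd m n c)) S0).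
  { unfold is_series.
    change (is_lim_seq (sum_n (term m p (leftEnd m n c))) S0).
    apply is_lim_seq_ext_loc with (u := fun _ => S0).
    { exists n. intros N HN. rewrite sum_left by auto. reflexivity. }
    apply is_lim_seq_const. }
  unfold muF, Frep.
  change (Series (term m p (rightEnd m n c)) - Series (term m p (leftEnd m n c)) =
          pprod (fun j => ptilde m p (c j) j) n).
  rewrite (is_series_unique _ _ HR), (is_series_unique _ _ HL).
  replace (pprod E n) with (pprod (fun j => ptilde m p (c j) j) n). ring.
  apply pprod_ext. intros l Hl. unfold E, rightEnd, endA, endB.
  assert (Ee : (l <=? n)%nat = true) by (apply Nat.leb_le; lia).
  destruct (Nat.odd n); cbv beta; rewrite Ee; reflexivity.
Qed.
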